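(* Let $n\ge 1$ and $r\ge 1$ be integers, and consider a two-sided matching problem with a set $\mathcal{M}$ of $n$ men and a set $\mathcal{W}$ of $n+r$ women, in which each man's preference list is an independent uniformly random ordering of $\mathcal{W}$ and each woman's preference list is an independent uniformly random ordering of $\mathcal{M}$. For $x\in\mathcal{M}\cup\mathcal{W}$, let $N(x)$ be the number of stable partners of $x$. Then for every $x\in\mathcal{M}\cup\mathcal{W}$, $$\mathbb{P}\bigl(N(x)>1\bigr)\le\frac{1}{r+1}\quad\text{and}\quad\mathbb{E}\bigl(N(x)\bigr)\le 1+\frac{1}{r}.$$
   Context: Stable matchings are in the sense of Gale and Shapley (a matching pairs each man with at most one woman and vice versa; it is stable if no man and woman not matched together both strictly prefer each other to their assigned partners, being unmatched ranked below every partner). $y$ is a stable partner of $x$ if $x$ and $y$ are matched in some stable matching. *)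

(* Defs.v *)
(* Uniform random preferences = counting measure on the
   finite type of all preference profiles. *)
From mathcomp Require Import all_boot all_order all_algebra all_fingroup.
Set Implicit Arguments. Unset Strict Implicit. Unset Printing Implicit Defensive.
Import Order.TTheory GRing.Theory Num.Theory.

(* A preference profile gives, for each man,
   a permutation of the women (P.1 m w = rank of w in m's list, 0 = best), and
   for each woman a permutation of the men (P.2 w m = rank of m in w's list). *)
Definition profile (n r : nat) : finType :=
  ({ffun 'I_n -> {perm 'I_(n + r)}} * {ffun 'I_(n + r) -> {perm 'I_n}})%type.

Definition matchingT (n r : nat) : finType := {ffun 'I_n -> option 'I_(n + r)}.

Definition is_matching n r (mu : matchingT n r) : bool :=
  [forall m1, forall m2, (mu m1 != None) && (mu m1 == mu m2) ==> (m1 == m2)].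

Definition blocking n r (P : profile n r) (mu : matchingT n r)
    (m : 'I_n) (w : 'I_(n + r)) : bool :=
  [&& mu m != Some w,
      (if mu m is Some w' then (P.1 m w < P.1 m w')%N else true) &
      [forall m', (mu m' == Some w) ==> (P.2 w m < P.2 w m')%N]].

Definition stable n r (P : profile n r) (mu : matchingT n r) : bool :=
  is_matching mu && [forall m, forall w, ~~ blocking P mu m w].

Definition Nstable n r (P : profile n r) (x : 'I_n + 'I_(n + r)) : nat :=
  match x with
  | inl m => #|[set w : 'I_(n + r) | [exists mu, stable P mu && (mu m == Some w)]]|
  | inr w => #|[set m : 'I_n | [exists mu, stable P mu && (mu m == Some w)]]|
  end.

Local Open Scope ring_scope.

Definition probN n r (E : pred (profile n r)) : rat :=
  #|[set P | E P]|%:R / #|profile n r|%:R.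

Definition expect n r (X : profile n r -> nat) : rat :=
  (\sum_(P : profile n r) (X P)%:R) / #|profile n r|%:R.

(* Main.v *)
Require Import Defs.
From mathcomp Require Import all_boot all_order all_algebra all_fingroup.
From mathcomp Require Import zify.
From Stdlib Require Import FunctionalExtensionality.
Import Order.TTheory GRing.Theory Num.Theory.

Module Aux.
Set Implicit Arguments. Unset Strict Implicit. Unset Printing Implicit Defensive.

Section Machine.
Variables (n r : nat).
Hypothesis hr : (0 < r)%N.
Local Notation W := 'I_(n + r).
Local Notation M := 'I_n.
Local Notation prof := (profile n r).

Definition w0 : W := Ordinal (ltn_addl n hr).

Definition rk (P : prof) (a : M) (w : W) : nat := P.1 a w.
Definition wr (P2 : {ffun W -> {perm M}}) (w : W) (a : M) : nat := P2 w a.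
Definition Lw (P : prof) (a : M) (i : W) : W := ((P.1 a)^-1)%g i.

Lemma rkL P a i : rk P a (Lw P a i) = i.
Proof. by rewrite /rk /Lw permKV. Qed.
Lemma LrkE P a w : Lw P a (P.1 a w) = w.
Proof. by rewrite /Lw permK. Qed.

Record state := St { pos : {ffun M -> W}; spec : option (W * M * {set W});
  cnt : nat; stp : bool }.

Definition s0 : state := St [ffun => w0] None 0 false.

Definition tgt (P : prof) (s : state) (a : M) : W := Lw P a (pos s a).

Definition rejected (tg : M -> W) (P2 : {ffun W -> {perm M}})
   (sp : option (W * M * {set W})) (a : M) : bool :=
  [exists c, (c != a) && (tg c == tg a) && (wr P2 (tg a) c < wr P2 (tg a) a)%N]
  || (if sp is Some (w, m, _) then (tg a == w) && (wr P2 w m <= wr P2 w a)%N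
      else false).

Definition failure (tg : M -> W) (sp : option (W * M * {set W})) : bool :=
  if sp is Some (_, _, U0) then [exists a, tg a \in U0] else false.

Definition upd (p : {ffun M -> W}) (a : M) (i : W) : {ffun M -> W} :=
  [ffun c => if c == a then i else p c].

Definition incr (p : {ffun M -> W}) (a : M) : option {ffun M -> W} :=
  if (insub (p a).+1 : option W) is Some i then Some (upd p a i) else None.

Definition stopst (s : state) := St (pos s) (spec s) (cnt s) true.

Definition pman (tg : M -> W) (x : M + W) : option M :=
  match x with inl m => Some m | inr w => [pick a | tg a == w] end.

Definition stepT (tg : M -> W) (P2 : {ffun W -> {perm M}}) (x : M + W)
    (s : state) : state :=
  if stp s then s else
  if failure tg (spec s) then stopst s else
  if [pick a | rejected tg P2 (spec s) a] is Some a then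
    (if incr (pos s) a is Some p' then St p' (spec s) (cnt s) false
     else stopst s)
  else match spec s with
  | Some (w, _, _) =>
      if [exists a, tg a == w] then St (pos s) None (cnt s).+1 false
      else stopst s
  | None =>
      if pman tg x is Some m then
        (if incr (pos s) m is Some p' then
           St p' (Some (tg m, m, [set w' | [forall a, tg a != w']])) (cnt s) false
         else stopst s)
      else stopst s
  end.

Variable x : M + W.

Definition step (P : prof) (s : state) := stepT (tgt P s) P.2 x s.
Definition run (P : prof) (i : nat) := iter i (step P) s0.
Definition F := (2 * n * (n + r)).+1.
Definition kk (P : prof) := cnt (run P F).


Variant step_spec (tg : M -> W) (P2 : {ffun W -> {perm M}}) (s : state) : state -> Type :=
 | SStp : stp s -> step_spec tg P2 s s
 | SHalt : ~~ stp s ->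
     [\/ failure tg (spec s),
        (exists2 a, rejected tg P2 (spec s) a & incr (pos s) a = None),
        (forall a, ~~ rejected tg P2 (spec s) a) /\
          (exists w m U0, spec s = Some (w, m, U0) /\ forall a, tg a != w) |
        [/\ (forall a, ~~ rejected tg P2 None a), spec s = None &
          (pman tg x = None \/ exists2 m, pman tg x = Some m & incr (pos s) m = None)]] ->
     step_spec tg P2 s (stopst s)
 | SRej a p' : ~~ stp s -> ~~ failure tg (spec s) -> rejected tg P2 (spec s) a ->
     incr (pos s) a = Some p' -> step_spec tg P2 s (St p' (spec s) (cnt s) false)
 | SSucc w m U0 : ~~ stp s -> ~~ failure tg (spec s) ->
     (forall a, ~~ rejected tg P2 (spec s) a) -> spec s = Some (w, m, U0) ->
     (exists a, tg a = w) -> step_spec tg P2 s (St (pos s) None (cnt s).+1 false)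
 | SStart m p' : ~~ stp s -> spec s = None ->
     (forall a, ~~ rejected tg P2 None a) -> pman tg x = Some m ->
     incr (pos s) m = Some p' ->
     step_spec tg P2 s (St p' (Some (tg m, m, [set w' | [forall a, tg a != w']])) (cnt s) false).

Lemma stepP tg P2 s : step_spec tg P2 s (stepT tg P2 x s).
Proof.
rewrite /stepT; case: ifP => [h|hs]; first exact: SStp.
have hs' : ~~ stp s by rewrite hs.
case: ifP => hf; first by apply: SHalt => //; apply: Or41.
have hf' : ~~ failure tg (spec s) by rewrite hf.
case: pickP => [a ha|hna].
  case e: incr => [p'|]; last by apply: SHalt => //; apply: Or42; exists a.
  exact: (SRej hs' hf' ha e).
have hna' : forall a, ~~ rejected tg P2 (spec s) a by move=> a; rewrite hna.
case e: (spec s) => [[[w m] U0]|].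
  case: ifP => he; last first.
    apply: SHalt => //; apply: Or43; split => //; exists w, m, U0; split => //.
    by move=> a; apply: contraFN he => ha; apply/existsP; exists a.
  apply: (SSucc hs' hf' hna' e).
  by case/existsP: he => a /eqP <-; exists a.
have hnb : forall a, ~~ rejected tg P2 None a by move=> a; have := hna' a; rewrite e.
case ep: pman => [m|]; last by apply: SHalt => //; apply: Or44; split => //; left.
case ei: incr => [p'|]; last by apply: SHalt => //; apply: Or44; split => //; right; exists m.
exact: SStart.
Qed.

Lemma incrE p a p' : incr p a = Some p' ->
  forall c, (p' c : nat) = if c == a then (p a).+1 else p c.
Proof.
rewrite /incr; case: insubP => // i _ hi [<-] c.
by rewrite /upd ffunE; case: (c == a).
Qed.

Lemma incrNone (p : {ffun M -> W}) a : incr p a = None -> (n + r <= (p a).+1)%N.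
Proof. by rewrite /incr; case: insubP => // ; rewrite ltnNge => /negbNE. Qed.

Lemma incrSome (p : {ffun M -> W}) a : ((p a).+1 < n + r)%N -> exists p', incr p a = Some p'.
Proof. rewrite /incr; case: insubP => [i _ _|] ; [by eexists| by move=> /negP]. Qed.

Lemma runS P i : run P i.+1 = step P (run P i).
Proof. by rewrite /run iterS. Qed.

Lemma step_mono P s a : (pos s a <= pos (step P s) a)%N.
Proof.
rewrite /step; case: stepP => //=.
- by move=> a' p' _ _ _ /incrE ->; case: eqP => // ->.
- by move=> m p' _ _ _ _ /incrE ->; case: eqP => // ->.
Qed.

Lemma stp_step P s : stp s -> step P s = s.
Proof. by rewrite /step/stepT => ->. Qed.

Lemma stp_mono P i j : (i <= j)%N -> stp (run P i) -> stp (run P j).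
Proof.
move=> /subnK <-; elim: (j - i) => // d IH h.
by rewrite addSn runS stp_step // IH.
Qed.

Lemma pos_mono P i j a : (i <= j)%N -> (pos (run P i) a <= pos (run P j) a)%N.
Proof.
move=> /subnK <-; elim: (j - i) => // d IH.
by rewrite addSn runS (leq_trans IH) // step_mono.
Qed.

Lemma cnt_step P s : (cnt s <= cnt (step P s) <= (cnt s).+1)%N.
Proof. by rewrite /step; case: stepP => //= *; rewrite leqnn ?leqnSn. Qed.

Lemma cnt_mono P i j : (i <= j)%N -> (cnt (run P i) <= cnt (run P j))%N.
Proof.
move=> /subnK <-; elim: (j - i) => // d IH.
by rewrite addSn runS (leq_trans IH) //; case/andP: (cnt_step P (run P (d + i))).
Qed.


Lemma incr_other (p p' : {ffun M -> W}) a c : incr p a = Some p' -> c != a -> p' c = p c.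
Proof.
rewrite /incr; case: insubP => // i _ hi [<-] hc.
by rewrite /upd ffunE (negbTE hc).
Qed.

Lemma incr_self (p p' : {ffun M -> W}) a : incr p a = Some p' -> (p' a : nat) = (p a).+1.
Proof. by move/incrE => ->; rewrite eqxx. Qed.

Lemma tgtP P s a w : (tgt P s a == w) = (rk P a w == pos s a).
Proof.
rewrite /tgt /rk /Lw; apply/eqP/eqP => [<-|h]; first by rewrite permKV.
have -> : pos s a = P.1 a w by apply: val_inj.
by rewrite permK.
Qed.

Lemma LwP P a (i : W) w : (Lw P a i == w) = (rk P a w == i).
Proof.
rewrite /rk /Lw; apply/eqP/eqP => [<-|h]; first by rewrite permKV.
have -> : i = P.1 a w by apply: val_inj.
by rewrite permK.
Qed.

Definition touchedI P s := forall w' a, (rk P a w' <= pos s a)%N ->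
  (exists c, tgt P s c = w') \/ (exists m U0, spec s = Some (w', m, U0)).

Lemma touch_step P s : touchedI P s -> touchedI P (step P s).
Proof.
rewrite /step; case: stepP => //.
- move=> a p' hs hf hrej hinc IH w' a' /=.
  have [ea|na] := eqVneq a' a.
    subst a'; rewrite (incr_self hinc) leq_eqVlt ltnS => /orP [/eqP e|le].
      by left; exists a; rewrite /tgt /=; apply/eqP; rewrite LwP e (incr_self hinc).
    case: (IH w' a le) => [[c hc]|hsp]; last by right.
    have [eca|nca] := eqVneq c a.
      subst c; case/orP: hrej => [/existsP [c' /andP [/andP [hc' /eqP e] _]]|].
        by left; exists c'; rewrite /tgt /= (incr_other hinc hc') -/(tgt P s c') e.
      case e: (spec s) => [[[w m] U0]|] //= /andP [/eqP ew _].
      by right; exists m, U0; rewrite -hc ew.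
    by left; exists c; rewrite /tgt /= (incr_other hinc nca).
  rewrite (incr_other hinc na) => le.
  case: (IH w' a' le) => [[c hc]|hsp]; last by right.
  have [eca|nca] := eqVneq c a.
    subst c; case/orP: hrej => [/existsP [c' /andP [/andP [hc' /eqP e] _]]|].
      by left; exists c'; rewrite /tgt /= (incr_other hinc hc') -/(tgt P s c') e.
    case e: (spec s) => [[[w m] U0]|] //= /andP [/eqP ew _].
    by right; exists m, U0; rewrite -hc ew.
  by left; exists c; rewrite /tgt /= (incr_other hinc nca).
- move=> w m U0 hs hf hrej e [a0 ha0] IH w' a' /= le.
  case: (IH w' a' le) => [[c hc]|[m' [U0' e']]]; first by left; exists c.
  by left; exists a0; move: e'; rewrite e => -[<- _ _].
- move=> m p' hs e hrej hp hinc IH w' a' /=.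
  have H2 : forall c, tgt P s c = w' -> (exists c0, Lw P c0 (p' c0) = w') \/
      (exists m0 U1, Some (tgt P s m, m, [set w'0 | [forall a, tgt P s a != w'0]]) = Some (w', m0, U1)).
    move=> c hc; have [ecm|ncm] := eqVneq c m.
      by subst c; right; exists m, [set w'0 | [forall a, tgt P s a != w'0]]; rewrite hc.
    by left; exists c; rewrite (incr_other hinc ncm).
  have [ea|na] := eqVneq a' m.
    subst a'; rewrite (incr_self hinc) leq_eqVlt ltnS => /orP [/eqP e'|le].
      by left; exists m; apply/eqP; rewrite LwP e' (incr_self hinc).
    case: (IH w' m le) => [[c hc]|[? [? hsp]]]; last by rewrite e in hsp.
    exact: H2 hc.
  rewrite (incr_other hinc na) => le.
  case: (IH w' a' le) => [[c hc]|[? [? hsp]]]; last by rewrite e in hsp.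
  exact: H2 hc.
Qed.

Lemma touch_run P i : touchedI P (run P i).
Proof.
elim: i => [|i IH]; last by rewrite runS; apply: touch_step.
move=> w' a /=; rewrite ffunE /= leqn0 => /eqP h.
left; exists a; apply/eqP; rewrite tgtP /= ffunE /= h //.
Qed.


Lemma norej_inj tg P2 sp : (forall a, ~~ rejected tg P2 sp a) -> injective tg.
Proof.
move=> h a c e; apply/eqP; apply: contraT => nac.
have hna := h a; have hnc := h c.
rewrite /rejected negb_or in hna; rewrite /rejected negb_or in hnc.
move: hna => /andP [/existsPn hna _]; move: hnc => /andP [/existsPn hnc _].
move: (hna c) (hnc a) => {hna hnc} hna hnc.
rewrite eq_sym nac e eqxx /= -leqNgt in hna.
rewrite nac e eqxx /= -leqNgt in hnc.
have : wr P2 (tg c) a = wr P2 (tg c) c by apply/eqP; rewrite eqn_leq hna hnc.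
by move/val_inj/perm_inj => eac; rewrite eac eqxx in nac.
Qed.

Lemma card_unpointed (tg : M -> W) : injective tg ->
  #|[set w' | [forall a, tg a != w']]| = r.
Proof.
move=> itg.
have -> : [set w' | [forall a, tg a != w']] = ~: (tg @: setT).
  apply/setP => w'; rewrite !inE; apply/forallP/negP => [h /imsetP [a _ ea]|h a].
    by have := h a; rewrite ea eqxx.
  by apply/eqP => ea; apply: h; apply/imsetP; exists a.
by rewrite cardsCs setCK card_imset // cardsT !card_ord addKn.
Qed.

Definition specI P s := forall w m U0, spec s = Some (w, m, U0) ->
  [/\ #|U0| = r, w \notin U0,
      (~~ stp s -> forall a u, u \in U0 -> (pos s a <= rk P a u)%N) &
      (rk P m w < pos s m)%N].

Lemma spec_step P s : touchedI P s -> specI P s -> specI P (step P s).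
Proof.
move=> T; rewrite /step; case: stepP => //.
- by move=> hs _ IH w m U0 /= e; have [h1 h2 h3 h4] := IH w m U0 e.
- move=> a p' hs hf hrej hinc IH w m U0 /= e.
  have [h1 h2 h3 h4] := IH w m U0 e; split => //.
    move=> _ a' u hu; have := h3 hs a' u hu.
    have : tgt P s a' \notin U0.
      by move: hf; rewrite e /failure => /existsPn /(_ a').
    rewrite leq_eqVlt => ht /orP [/eqP epos|lt].
      have et : tgt P s a' = u by apply/eqP; rewrite tgtP epos.
      by rewrite et hu in ht.
    have [ea|na] := eqVneq a' a; last by rewrite (incr_other hinc na) ltnW.
    by subst a'; rewrite (incr_self hinc).
  have [ea|na] := eqVneq m a; last by rewrite (incr_other hinc na).
  by subst m; rewrite (incr_self hinc) ltnS ltnW.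
- move=> m p' hs e hrej hp hinc IH w m' U0 /= [ew em eU]; subst w m' U0.
  split.
  + exact: card_unpointed (norej_inj hrej).
  + by rewrite inE negb_forall; apply/existsP; exists m; rewrite eqxx.
  + move=> _ a u; rewrite inE => /forallP hu.
    have lt : (pos s a < rk P a u)%N.
      rewrite ltnNge; apply/negP => le; case: (T u a le) => [[c hc]|[? [? hsp]]].
        by have := hu c; rewrite hc eqxx.
      by rewrite e in hsp.
    have [ea|na] := eqVneq a m; last by rewrite (incr_other hinc na) ltnW.
    by subst a; rewrite (incr_self hinc).
  + have : rk P m (tgt P s m) = pos s m by apply/eqP; rewrite -tgtP.
    by move=> ->; rewrite (incr_self hinc).
Qed.

Lemma spec_run P i : specI P (run P i).
Proof.
elim: i => [|i IH] //; rewrite runS; apply: spec_step => //; exact: touch_run.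
Qed.


Definition nf (nu : matchingT n r) (a : M) : W := odflt w0 (nu a).

Lemma match_inj (nu : matchingT n r) : is_matching nu ->
  forall a c w', nu a = Some w' -> nu c = Some w' -> a = c.
Proof.
move=> /forallP h a c w' ea ec; have := h a => /forallP /(_ c).
by rewrite ea ec eqxx /= => /eqP.
Qed.

Lemma noblock (P : prof) (nu : matchingT n r) : stable P nu -> forall c w', nu c != Some w' ->
  (if nu c is Some w'' then (P.1 c w' < P.1 c w'')%N else true) ->
  (forall m', nu m' = Some w' -> (P.2 w' c < P.2 w' m')%N) -> False.
Proof.
case/andP => _ /forallP h c w' h1 h2 h3.
have := h c => /forallP /(_ w'); rewrite /blocking h1 h2 /=.
case/negP; apply/forallP => m'; apply/implyP => /eqP; exact: h3.
Qed.

Lemma all_matched (P : prof) (nu : matchingT n r) : stable P nu -> forall a, nu a = Some (nf nu a).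
Proof.
move=> hs a; rewrite /nf; case e: (nu a) => [w'|] //; exfalso.
have lt : #|[set nf nu c | c in M]| < #|W|.
  by rewrite card_ord (leq_ltn_trans (leq_imset_card _ _)) // card_ord -addn1 leq_add2l.
have /subsetPn [u _ hu] : ~~ ([set: W] \subset [set nf nu c | c in M]).
  by apply: contraL lt => /subset_leq_card; rewrite cardsT -leqNgt.
apply: (noblock hs (c := a) (w' := u)); first by rewrite e.
  by rewrite e.
move=> m' em'; case/imsetP: hu; exists m' => //.
by rewrite /nf em'.
Qed.

Lemma noblock' (P : prof) (nu : matchingT n r) : stable P nu -> forall c w', nf nu c != w' ->
  (rk P c w' < rk P c (nf nu c))%N ->
  (forall m', nf nu m' = w' -> (wr P.2 w' c < wr P.2 w' m')%N) -> False.
Proof.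
move=> hs c w' h1 h2 h3; apply: (noblock hs (c := c) (w' := w')).
- by rewrite (all_matched hs); apply: contra h1 => /eqP [->].
- by rewrite (all_matched hs).
- move=> m' e; apply: h3; by rewrite /nf e.
Qed.

Lemma nf_inj (P : prof) (nu : matchingT n r) : stable P nu -> injective (nf nu).
Proof.
move=> hs a c e; have /andP [hm _] := hs.
by apply: (match_inj hm (w' := nf nu c)); rewrite (all_matched hs) ?e.
Qed.


Definition Jinv P (nu : matchingT n r) s :=
  (forall a, (pos s a <= rk P a (nf nu a))%N) /\
  (forall w m U0, spec s = Some (w, m, U0) ->
     (rk P m w < rk P m (nf nu m))%N /\ forall u a, u \in U0 -> nf nu a != u).

Lemma tgt_eq_nf P nu s a : (pos s a : nat) = rk P a (nf nu a) -> tgt P s a = nf nu a.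
Proof. by move=> e; apply/eqP; rewrite tgtP e. Qed.

Lemma pointed_matched P nu s : stable P nu ->
  (forall a, (pos s a <= rk P a (nf nu a))%N) ->
  forall a, exists c, nf nu c = tgt P s a.
Proof.
move=> hs hp a.
have [e|ne] := eqVneq (pos s a : nat) (rk P a (nf nu a)).
  by exists a; rewrite (tgt_eq_nf e).
case: (boolP [exists c, nf nu c == tgt P s a]) => [/existsP [c /eqP <-]|/existsPn hc].
  by exists c.
exfalso; apply: (noblock' hs (c := a) (w' := tgt P s a)).
- by have := hc a; rewrite eq_sym.
- have : rk P a (tgt P s a) = pos s a by apply/eqP; rewrite -tgtP.
  by move=> ->; rewrite ltn_neqAle ne hp.
- by move=> m' em'; have := hc m'; rewrite em' eqxx.
Qed.

Lemma rural P nu s : stable P nu ->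
  (forall a, (pos s a <= rk P a (nf nu a))%N) -> injective (tgt P s) ->
  forall c, exists a, tgt P s a = nf nu c.
Proof.
move=> hs hp itg c.
have sub : tgt P s @: setT \subset nf nu @: setT.
  apply/subsetP => w' /imsetP [a _ ->]; have [c' hc'] := pointed_matched hs hp a.
  by apply/imsetP; exists c'.
have : tgt P s @: setT == nf nu @: setT.
  by rewrite eqEcard sub /= (card_imset _ itg) (card_imset _ (nf_inj hs)).
move/eqP => e; have : nf nu c \in tgt P s @: setT by rewrite e imset_f.
by case/imsetP => a _ ->; exists a.
Qed.

Lemma sum_incr (p p' : {ffun M -> W}) a : incr p a = Some p' ->
  (\sum_c (p' c : nat) = (\sum_c (p c : nat)).+1)%N.
Proof.
move=> h; rewrite (bigD1 a) //= (bigD1 a (P := predT)) //= (incr_self h) addSn.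
congr (_ + _).+1; apply: eq_bigr => c hc; by rewrite (incr_other h hc).
Qed.

Definition good P s := [&& ~~ stp s, spec s == None &
  [forall a, ~~ rejected (tgt P s) P.2 None a]].

Definition agree P (nu : matchingT n r) s :=
  match x with
  | inl a => tgt P s a == nf nu a
  | inr w => [exists c, (tgt P s c == w) && (nf nu c == w)]
  end.

Definition Phi s := (2 * (\sum_a (pos s a : nat)) + (spec s == None))%N.

Lemma nofail P nu s : stable P nu -> Jinv P nu s -> ~~ failure (tgt P s) (spec s).
Proof.
move=> hs [hp hsp]; rewrite /failure; case e: (spec s) => [[[w m] U0]|] //.
apply/existsP => -[a ha]; have [_ hU] := hsp _ _ _ e.
have [eq|ne] := eqVneq (pos s a : nat) (rk P a (nf nu a)).
  by have := hU _ a ha; rewrite -(tgt_eq_nf eq) eqxx.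
apply: (noblock' hs (c := a) (w' := tgt P s a)); first exact: hU.
- have : rk P a (tgt P s a) = pos s a by apply/eqP; rewrite -tgtP.
  by move=> ->; rewrite ltn_neqAle ne hp.
- by move=> m' em'; have := hU _ m' ha; rewrite em' eqxx.
Qed.

Lemma rej_lt P nu s a : stable P nu -> Jinv P nu s ->
  rejected (tgt P s) P.2 (spec s) a -> (pos s a < rk P a (nf nu a))%N.
Proof.
move=> hs [hp hsp] hrej; rewrite ltn_neqAle hp andbT; apply/negP => /eqP ea.
have ena := tgt_eq_nf ea.
case/orP: hrej => [/existsP [c /andP [/andP [hca /eqP etc] hlt]]|].
  have nfc : nf nu c != tgt P s c.
    rewrite etc ena; apply: contra hca => /eqP; move/(nf_inj hs) => ->; by [].
  have ltc : (pos s c < rk P c (nf nu c))%N.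
    rewrite ltn_neqAle hp andbT; apply: contra nfc => /eqP e.
    by rewrite (tgt_eq_nf e).
  apply: (noblock' hs (c := c) (w' := tgt P s a)); first by rewrite -etc.
    have : rk P c (tgt P s c) = pos s c by apply/eqP; rewrite -tgtP.
    by rewrite etc => ->.
  move=> m' em'; have : m' = a by apply: (nf_inj hs); rewrite em' ena.
  by move=> ->.
case e: (spec s) => [[[w m] U0]|] //= /andP [/eqP ew hle].
have [hm _] := hsp _ _ _ e.
have nfm : nf nu m != w.
  apply/eqP => em; move: hm; by rewrite em ltnn.
have nma : m != a by apply: contra nfm => /eqP ->; rewrite -ena ew.
apply: (noblock' hs (c := m) (w' := w)) => // m' em'.
have -> : m' = a by apply: (nf_inj hs); rewrite em' -ew ena.
rewrite ltn_neqAle hle andbT; apply: contra nma => /eqP e'.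
by apply/eqP; apply: perm_inj (val_inj e').
Qed.


Lemma incr_lt (p : {ffun M -> W}) a (b : nat) : ((p a : nat) < b)%N -> (b < n + r)%N ->
  exists p', incr p a = Some p'.
Proof. move=> h1 h2; apply: incrSome; exact: leq_ltn_trans h1 h2. Qed.

Definition xcond (nu : matchingT n r) :=
  if x is inr w then exists c, nf nu c = w else True.

Lemma start_lt P nu s : stable P nu -> xcond nu -> Jinv P nu s ->
  (forall a, ~~ rejected (tgt P s) P.2 None a) -> ~~ agree P nu s ->
  exists2 m, pman (tgt P s) x = Some m & (pos s m < rk P m (nf nu m))%N.
Proof.
move=> hs hx [hp hsp] hrej hag; have itg := norej_inj hrej.
rewrite /pman; move: hx hag; rewrite /xcond /agree; case: x => [a|w] hx hag.
  exists a => //; rewrite ltn_neqAle hp andbT; apply: contra hag => /eqP e.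
  by rewrite (tgt_eq_nf e).
case: hx => c hc; have [a ha] := rural hs hp itg c.
case: pickP => [m /eqP hm|/(_ a)]; last by rewrite ha hc eqxx.
exists m => //; rewrite ltn_neqAle hp andbT; apply: contra hag => /eqP e.
by apply/existsP; exists m; rewrite hm eqxx -(tgt_eq_nf e) hm eqxx.
Qed.

Lemma Jstep P nu s : stable P nu -> xcond nu -> Jinv P nu s -> specI P s ->
  ~~ stp s -> ~~ (good P s && agree P nu s) ->
  [/\ Jinv P nu (step P s), ~~ stp (step P s) & (Phi s < Phi (step P s))%N].
Proof.
move=> hs hx J SI; have nf0 := nofail hs J; case: (J) => hp hsp.
have rk_lt : forall a, (rk P a (nf nu a) < n + r)%N by move=> a; rewrite /rk ltn_ord.
rewrite /step; case: stepP => //.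
- by move=> h; rewrite h.
- move=> hst [hf|[a hrej hinc]|[hrej [w [m [U0 [e hw]]]]]|[hrej e hpm]] _ hng.
  + by rewrite hf in nf0.
  + have [p' hp'] := incr_lt (rej_lt hs J hrej) (rk_lt a).
    by rewrite hp' in hinc.
  + exfalso; have itg := norej_inj hrej.
    have [h1 h2 _ _] := SI _ _ _ e.
    have sub : tgt P s @: setT \subset ~: U0.
      apply/subsetP => w' /imsetP [a _ ->]; rewrite inE.
      by move: nf0; rewrite e /failure => /existsPn.
    have : tgt P s @: setT == ~: U0.
      have cU : #|~: U0| = n by rewrite cardsCs setCK h1 card_ord addnK.
      by rewrite eqEcard sub (card_imset _ itg) cU /= cardsT card_ord.
    move/eqP => eU; have : w \in tgt P s @: setT by rewrite eU inE.
    by case/imsetP => a _ ea; have := hw a; rewrite ea eqxx.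
  + have hgood : good P s by rewrite /good hst e eqxx /=; apply/forallP.
    rewrite hgood /= in hng.
    have [m hm lt] := start_lt hs hx J hrej hng.
    have [p' hp'] := incr_lt lt (rk_lt m).
    by case: hpm => [|[m' hm' hi]]; [rewrite hm | rewrite hm' in hm; case: hm hi => ->; rewrite hp'].
- move=> a p' hst hf hrej hinc _ _; split => //.
  + split => // a'; have [ea|na] := eqVneq a' a; last by rewrite (incr_other hinc na).
    by subst a'; rewrite /= (incr_self hinc); exact: rej_lt hs J hrej.
  + rewrite /Phi /= (sum_incr hinc); set b := (spec s == None); set S := (\sum_c _)%N; lia.
- move=> w m U0 hst hf hrej e _ _ _; split => //.
  + rewrite /Phi /= e /=; set S := (\sum_c _)%N; lia.
- move=> m p' hst e hrej hpm hinc _ hng.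
  have hgood : good P s by rewrite /good hst e eqxx /=; apply/forallP.
  rewrite hgood /= in hng.
  have [m' hm' lt] := start_lt hs hx J hrej hng.
  rewrite hpm in hm'; case: hm' lt => <- lt.
  split => //.
  + split => /= [a'|w2 m2 U2 [ew em eU]].
      have [ea|na] := eqVneq a' m; last by rewrite (incr_other hinc na).
      by subst a'; rewrite (incr_self hinc).
    subst w2 m2 U2; split.
      have : rk P m (tgt P s m) = pos s m by apply/eqP; rewrite -tgtP.
      by move=> ->.
    move=> u a; rewrite inE => /forallP hu.
    have [c hc] := rural hs hp (norej_inj hrej) a.
    by rewrite -hc; apply/eqP => ec; have := hu c; rewrite ec eqxx.
  + rewrite /Phi /= (sum_incr hinc) e /=; set S := (\sum_c _)%N; lia.
Qed.


Lemma Phi_le s : (Phi s <= F)%N.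
Proof.
rewrite /Phi /F; have : (\sum_a (pos s a : nat) <= n * (n + r))%N.
  rewrite -[n in (n * _)%N]card_ord -sum_nat_const; apply: leq_sum => a _.
  exact: ltnW.
case: (spec s == None) => /=; lia.
Qed.

Lemma agree_exists P nu : stable P nu -> xcond nu ->
  exists i, [/\ (i <= F)%N, good P (run P i) & agree P nu (run P i)].
Proof.
move=> hs hx.
have H : forall i, (exists i', [/\ (i' <= i)%N, good P (run P i') & agree P nu (run P i')])
   \/ [/\ Jinv P nu (run P i), ~~ stp (run P i) & (i < Phi (run P i))%N].
  elim=> [|i [[i' [h1 h2 h3]]|[J hst hphi]]].
  - right; split => //.
    + split => [a|//]; by rewrite /= ffunE.
    + by rewrite /Phi /= addn1.
  - by left; exists i'; split => //; rewrite (leq_trans h1).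
  - case hga: (good P (run P i) && agree P nu (run P i)).
      by left; exists i; case/andP: hga.
    have [J' hst' hphi'] := Jstep hs hx J (@spec_run P i) hst (negbT hga).
    by right; rewrite runS; split => //; exact: leq_ltn_trans hphi hphi'.
case: (H F) => [[i [h1 h2 h3]]|[_ _ hphi]]; first by exists i.
by have := Phi_le (run P F); rewrite leqNgt hphi.
Qed.


Lemma good_next P i d : good P (run P i) ->
  [\/ stp (run P (d.+1 + i)), (cnt (run P i) < cnt (run P (d.+1 + i)))%N |
      spec (run P (d.+1 + i)) != None /\ cnt (run P (d.+1 + i)) = cnt (run P i)].
Proof.
case/and3P => hst /eqP hsp /forallP hrej.
elim: d => [|d IH].
  rewrite add1n runS /step; case: stepP => //=.
  - by rewrite (negbTE hst).
  - by move=> _ _; apply: Or31.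
  - by move=> a p' _ _; rewrite hsp => h; have := hrej a; rewrite h.
  - by move=> w m U0 _ _ _; rewrite hsp.
  - by move=> m p' *; apply: Or33.
rewrite addSn runS; case: IH => [h|h|[h1 h2]].
- by apply: Or31; rewrite stp_step.
- apply: Or32; apply: (leq_trans h); by case/andP: (cnt_step P (run P (d.+1 + i))).
- rewrite /step; case: stepP => //=.
  + by move=> ->; apply: Or31.
  + by move=> _ _; apply: Or31.
  + by move=> *; apply: Or33.
  + by move=> *; apply: Or32; rewrite h2.
  + by move=> m p' _ e; rewrite e in h1.
Qed.

Lemma cnt_good_lt P i j : good P (run P i) -> good P (run P j) -> (i < j)%N ->
  (cnt (run P i) < cnt (run P j))%N.
Proof.
move=> gi gj /subnK; rewrite addnS -addSn => ej.
have := good_next (j - i.+1) gi; rewrite ej.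
case/and3P: gj => hst /eqP hsp _.
by case=> [h|//|[h _]]; [rewrite h in hst | rewrite hsp in h].
Qed.

Lemma card_good P : #|[set i : 'I_F.+1 | good P (run P i)]| <= (kk P).+1.
Proof.
rewrite -[X in _ <= X]card_ord.
apply: (@leq_card_in _ _ (fun i : 'I_F.+1 => (inord (cnt (run P i)) : 'I_(kk P).+1))).
move=> i j; rewrite !inE => gi gj.
have lei : (cnt (run P i) <= kk P)%N by apply: cnt_mono; rewrite -ltnS.
have lej : (cnt (run P j) <= kk P)%N by apply: cnt_mono; rewrite -ltnS.
move/(congr1 val); rewrite /= !inordK ?ltnS // => e.
apply/val_inj; case: (ltngtP i j) => // h.
  by have := cnt_good_lt gi gj h; rewrite e ltnn.
by have := cnt_good_lt gj gi h; rewrite e ltnn.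
Qed.

Lemma N_le P : (Nstable P x <= (kk P).+1)%N.
Proof.
rewrite /Nstable; case ex: x => [a0|w1].
  apply: leq_trans (card_good P); apply: leq_trans (leq_imset_card (fun i : 'I_F.+1 => tgt P (run P i) a0) _).
  apply: subset_leq_card; apply/subsetP => w; rewrite inE => /existsP [mu /andP [hs /eqP ha]].
  have hx : xcond mu by rewrite /xcond ex.
  have [i [hi hg hag]] := agree_exists hs hx.
  move: hag; rewrite /agree ex => /eqP hag.
  apply/imsetP; exists (Ordinal (hi : (i < F.+1)%N)); first by rewrite inE.
  by rewrite /= hag /nf ha.
set S := [set m | _].
case: (set_0Vmem S) => [->|[m0 hm0]]; first by rewrite cards0.
apply: leq_trans (card_good P).
apply: leq_trans (leq_imset_card (fun i : 'I_F.+1 => oapp id m0 (pman (tgt P (run P i)) x)) _).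
apply: subset_leq_card; apply/subsetP => c; rewrite inE => /existsP [mu /andP [hs /eqP hc]].
have hx : xcond mu by rewrite /xcond ex; exists c; rewrite /nf hc.
have [i [hi hg hag]] := agree_exists hs hx.
move: hag; rewrite /agree ex => /existsP [c' /andP [/eqP h1 /eqP h2]].
have ecc : c' = c by apply: (nf_inj hs); rewrite h2 /nf hc.
subst c'.
apply/imsetP; exists (Ordinal (hi : (i < F.+1)%N)); first by rewrite inE.
rewrite /=; case: pickP => [c' /eqP hc'|/(_ c)]; last by rewrite h1 eqxx.
case/and3P: hg => _ _ /forallP hrej.
by apply: (norej_inj (sp := None) (P2 := P.2) hrej); rewrite hc' h1.
Qed.


Definition swapP (P : prof) (b : M) (w u : W) : prof :=
  ([ffun a => if a == b then (tperm w u * P.1 a)%g else P.1 a], P.2).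

Lemma swapK P b w u : swapP (swapP P b w u) b w u = P.
Proof.
case: P => P1 P2; rewrite /swapP /=; congr (_, _); apply/ffunP => a; rewrite !ffunE.
by case: eqP => // ->; rewrite mulgA tperm2 mul1g.
Qed.

Lemma tgt_swap P b w u s a : tgt (swapP P b w u) s a =
  if a == b then tperm w u (tgt P s a) else tgt P s a.
Proof.
rewrite /tgt /Lw /= ffunE; case: eqP => // _.
by rewrite invMg permM tpermV.
Qed.

Lemma step_ext P Q s : (forall a, tgt Q s a = tgt P s a) -> Q.2 = P.2 ->
  step Q s = step P s.
Proof.
move=> h e; rewrite /step e.
by have -> : tgt Q s = tgt P s by apply: functional_extensionality.
Qed.

Lemma fail_stop P s : ~~ stp s -> failure (tgt P s) (spec s) -> step P s = stopst s.
Proof. by move=> h1 h2; rewrite /step /stepT (negbTE h1) h2. Qed.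

Lemma stp_frozen P i k : (i <= k)%N -> stp (run P i) -> run P k = run P i.
Proof.
move=> /subnK <-; elim: (k - i) => // d IH h.
by rewrite addSn runS IH // stp_step.
Qed.

Variable j : nat.

Definition hitb P (h : 'I_F) (b : M) :=
  let s := run P h in
  [&& ~~ stp s, cnt s == j, ~~ failure (tgt P s) (spec s),
      (if spec s is Some (w, _, U0) then
         [&& tgt P s b == w, #|U0| == r & [forall u in U0, (rk P b w < rk P b u)%N]]
       else false) &
      [forall i : 'I_h, (pos (run P i) b < pos s b)%N]].

Definition wof P (h : nat) := if spec (run P h) is Some (w, _, _) then w else w0.
Definition Uof P (h : nat) := if spec (run P h) is Some (_, _, U0) then U0 else set0.

Lemma hit_run P (h : 'I_F) b u : hitb P h b -> u \in Uof P h ->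
  forall i, (i <= h)%N -> run (swapP P b (wof P h) u) i = run P i.
Proof.
rewrite /hitb /wof /Uof; set s := run P h.
case/and5P => hst hc hf; case e: (spec s) => [[[w m] U0]|] //.
case/and3P => /eqP htb _ /forallP hU /forallP hpos hu.
elim=> // i IH hi; rewrite !runS IH ?(ltnW hi) //.
apply: step_ext => // a; rewrite tgt_swap; case: eqP => // ->.
have lt1 : (pos (run P i) b < rk P b w)%N.
  have : rk P b w = pos s b by apply/eqP; rewrite -tgtP htb.
  by move=> ->; exact: (hpos (Ordinal hi)).
have lt2 : (rk P b w < rk P b u)%N by have := hU u; rewrite hu.
rewrite tpermD // eq_sym tgtP; apply/eqP => e'.
  by rewrite e' ltnn in lt1.
by rewrite e' in lt2; have := ltn_trans lt1 lt2; rewrite ltnn.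
Qed.


Lemma hit_stop P (h : 'I_F) b u : hitb P h b -> u \in Uof P h ->
  run (swapP P b (wof P h) u) h.+1 = stopst (run P h).
Proof.
move=> hb hu; rewrite runS hit_run //.
move: hb hu; rewrite /hitb /wof /Uof; set s := run P h.
case/and5P => hst hc hf; case e: (spec s) => [[[w m] U0]|] //.
case/and3P => /eqP htb _ _ _ hu.
apply: fail_stop => //; rewrite e /=; apply/existsP; exists b.
by rewrite tgt_swap eqxx htb tpermL.
Qed.

Lemma hit_kk P (h : 'I_F) b u : hitb P h b -> u \in Uof P h ->
  kk (swapP P b (wof P h) u) = j.
Proof.
move=> hb hu; rewrite /kk (stp_frozen (i := h.+1)) //; last by rewrite hit_stop.
rewrite hit_stop //=; by case/and5P: hb => _ /eqP.
Qed.

Lemma hit_inj P P' (h h' : 'I_F) b b' u u' : hitb P h b -> hitb P' h' b' ->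
  u \in Uof P h -> u' \in Uof P' h' ->
  swapP P b (wof P h) u = swapP P' b' (wof P' h') u' -> P = P' /\ u = u'.
Proof.
move=> hb hb' hu hu' eQ; set Q := swapP P b (wof P h) u in eQ.
have hstp : forall (PP : prof) (h0 : 'I_F) b0, hitb PP h0 b0 -> forall i, (i <= h0)%N -> ~~ stp (run PP i).
  move=> PP h0 b0 /and5P [hst _ _ _ _] i hi; apply: contra hst; exact: stp_mono.
have eh : h = h' :> nat.
  case: (ltngtP h h') => // lt.
    have := hit_stop hb hu; rewrite -/Q eQ hit_run // => e.
    by have := hstp _ _ _ hb' h.+1 lt; rewrite e.
  have := hit_stop hb' hu'; rewrite -eQ hit_run // => e.
  by have := hstp _ _ _ hb h'.+1 lt; rewrite e.
have eh' : h = h' by apply: val_inj.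
subst h'.
have es : run P h = run P' h.
  by rewrite -(hit_run hb hu (leqnn h)) -/Q eQ hit_run.
have ew : wof P h = wof P' h by rewrite /wof es.
have eU : Uof P h = Uof P' h by rewrite /Uof es.
have tw : forall (PP : prof) b0, hitb PP h b0 -> tgt PP (run PP h) b0 = wof PP h.
  move=> PP b0; rewrite /hitb /wof; case/and5P => _ _ _.
  by case: (spec (run PP h)) => [[[w m] U0]|] // /and3P [/eqP -> _ _].
have key : forall (PP : prof) b0 u0, hitb PP h b0 -> u0 \in Uof PP h ->
   forall a, (tgt (swapP PP b0 (wof PP h) u0) (run PP h) a \in Uof PP h) = (a == b0).
  move=> PP b0 u0; rewrite /hitb /wof /Uof; set s := run PP h.
  case/and5P => hst hc hf; case e: (spec s) => [[[w m] U0]|] //.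
  case/and3P => /eqP htb _ _ _ hu0 a; rewrite tgt_swap.
  case: eqP => [->|_]; first by rewrite htb tpermL hu0.
  by apply/negbTE; move: hf; rewrite e /failure => /existsPn.
have eb : b = b'.
  apply/eqP; rewrite -(key P' b' u' hb' hu' b) -eQ -es -eU.
  by rewrite key // eqxx.
subst b'.
have eu : u = u'.
  have := congr1 (fun R => tgt R (run P h) b) eQ; rewrite /= !tgt_swap eqxx.
  by rewrite (tw _ _ hb) es (tw _ _ hb') !tpermL.
subst u'; split => //.
by rewrite -(swapK P b (wof P h) u) -/Q eQ -ew swapK.
Qed.


Lemma discrete (f : nat -> nat) N : f 0 = 0 -> (forall i, f i <= f i.+1 <= (f i).+1)%N ->
  (j < f N)%N -> exists i, [/\ (i < N)%N, f i = j & f i.+1 = j.+1].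
Proof.
move=> f0 hf; elim: N => [|N IH]; first by rewrite f0.
move=> hj; case: (ltnP j (f N)) => [lt|le].
  by have [i [h1 h2 h3]] := IH lt; exists i; split => //; rewrite ltnS ltnW.
have := hf N => /andP [h1 h2].
have eN : f N = j by apply/eqP; rewrite eqn_leq le -ltnS (leq_trans hj).
exists N; split => //; apply/eqP; rewrite eqn_leq hj -eN h2 //.
Qed.

Lemma last_true (f : nat -> bool) N : f 0 -> ~~ f N ->
  exists t, [/\ (t < N)%N, f t & forall i, (t < i)%N -> (i <= N)%N -> ~~ f i].
Proof.
move=> f0; elim: N => [|N IH]; first by rewrite f0.
move=> hN; case hfN: (f N).
  exists N; split => // i h1 h2.
  by have -> : i = N.+1 by apply/eqP; rewrite eqn_leq h2 h1.
have [t [h1 h2 h3]] := IH (negbT hfN); exists t; split => //; first by rewrite ltnS ltnW.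
move=> i hi; rewrite leq_eqVlt => /orP [/eqP ->//|]; rewrite ltnS; exact: h3.
Qed.

Lemma spec_const P s w m U0 w' m' U0' : spec s = Some (w, m, U0) ->
  spec (step P s) = Some (w', m', U0') -> (w', m', U0') = (w, m, U0) /\ cnt (step P s) = cnt s.
Proof.
move=> e; rewrite /step; case: stepP => /=.
- by move=> _; rewrite e => -[-> -> ->].
- by move=> _ _; rewrite e => -[-> -> ->].
- by move=> a p' _ _ _ _; rewrite e => -[-> -> ->].
- by [].
- by move=> m0 p' _; rewrite e.
Qed.


Lemma succ_info P s : cnt (step P s) = (cnt s).+1 ->
  [/\ ~~ stp s, ~~ failure (tgt P s) (spec s) &
      exists w m U0, spec s = Some (w, m, U0) /\ exists b, tgt P s b = w].
Proof.
rewrite /step; case: stepP => /=.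
- by move=> _ /eqP; rewrite -addn1 -{1}(addn0 (cnt s)) eqn_add2l.
- by move=> _ _ /eqP; rewrite -addn1 -{1}(addn0 (cnt s)) eqn_add2l.
- by move=> a p' _ _ _ _ /eqP; rewrite -addn1 -{1}(addn0 (cnt s)) eqn_add2l.
- by move=> w m U0 h1 h2 _ e hb _; split => //; exists w, m, U0.
- by move=> m p' _ _ _ _ _ /eqP; rewrite -addn1 -{1}(addn0 (cnt s)) eqn_add2l.
Qed.

Lemma start_info P s w m U0 : spec s = None -> spec (step P s) = Some (w, m, U0) ->
  [/\ (forall a, ~~ rejected (tgt P s) P.2 None a), tgt P s m = w &
      incr (pos s) m = Some (pos (step P s))].
Proof.
move=> e; rewrite /step; case: stepP => /=.
- by move=> _; rewrite e.
- by move=> _ _; rewrite e.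
- by move=> a p' _ _ _ _; rewrite e.
- by move=> w' m' U0' _ _ _; rewrite e.
- by move=> m' p' _ _ hrej _ hinc [<- <- _].
Qed.

Lemma hit P : (j < kk P)%N -> exists (h : 'I_F) b, hitb P h b.
Proof.
move=> hjk.
have cst : forall i, (cnt (run P i) <= cnt (run P i.+1) <= (cnt (run P i)).+1)%N.
  by move=> i; rewrite runS; exact: cnt_step.
have [i1 [his c1 c2]] := discrete (f := fun i => cnt (run P i)) erefl cst hjk.
move: c1 c2 => /= c1 c2.
have c2' : cnt (step P (run P i1)) = (cnt (run P i1)).+1 by rewrite -runS c2 c1.
have [hst hf [w [m [U0 [e [b hb]]]]]] := succ_info c2'.
have nE : ~~ (spec (run P i1) == None) by rewrite e.
have [t0 [ht0 st0 hnot]] := last_true (f := fun i => spec (run P i) == None) (N := i1) erefl nE.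
have cnst : forall k, (t0 < i1 - k)%N ->
    spec (run P (i1 - k)) = Some (w, m, U0) /\ cnt (run P (i1 - k)) = j.
  elim=> [|k IH] hk; first by rewrite subn0 e c1.
  have hk' : (t0 < i1 - k)%N by apply: (leq_trans hk); rewrite leq_sub2l.
  have [e1 e2] := IH hk'.
  have ei : i1 - k = (i1 - k.+1).+1 by lia.
  case es: (spec (run P (i1 - k.+1))) => [[[w1 m1] U1]|].
    rewrite ei runS in e1 e2.
    have [[-> -> ->] e3] := spec_const es e1; split => //; by rewrite -e3.
  by have := hnot (i1 - k.+1) hk (leq_subr _ _); rewrite es.
have cnst' : forall i, (t0 < i)%N -> (i <= i1)%N ->
    spec (run P i) = Some (w, m, U0) /\ cnt (run P i) = j.
  move=> i h1 h2; have := cnst (i1 - i); rewrite subKn //; apply; exact: h1.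
have [s1 _] := cnst' t0.+1 (ltnSn _) ht0.
rewrite runS in s1; have [hrej0 htm hinc] := start_info (eqP st0) s1.
rewrite -runS in hinc.
have hbw : (pos (run P i1) b : nat) = rk P b w by apply/esym/eqP; rewrite -tgtP hb.
have hmw : (pos (run P t0) m : nat) = rk P m w by apply/esym/eqP; rewrite -tgtP htm.
have nbm : b != m.
  apply/eqP => ebm; subst b.
  have := pos_mono P m ht0; rewrite hbw -hmw (incr_self hinc) ltnn //.
have lt0 : (pos (run P t0) b < rk P b w)%N.
  rewrite ltn_neqAle -hbw pos_mono ?(ltnW ht0) // andbT hbw.
  apply: contra nbm => /eqP e0; apply/eqP.
  apply: (norej_inj hrej0); rewrite htm; apply/eqP; rewrite tgtP e0 //.
have lt1 : (pos (run P t0.+1) b < rk P b w)%N by rewrite (incr_other hinc nbm).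
have exh : exists i, (rk P b w <= pos (run P i) b)%N by exists i1; rewrite hbw.
case: (ex_minnP exh) => h hh hmin.
have his' : (h <= i1)%N by apply: hmin; rewrite hbw.
have hlt : forall i, (i < h)%N -> (pos (run P i) b < rk P b w)%N.
  move=> i hi; rewrite ltnNge; apply/negP => /hmin; rewrite leqNgt hi //.
have th : (t0.+1 < h)%N.
  rewrite ltnNge; apply/negP => hle; have := pos_mono P b hle.
  by rewrite leqNgt (leq_trans lt1 hh).
have hpos : (pos (run P h) b : nat) = rk P b w.
  by apply/eqP; rewrite eqn_leq hh -hbw pos_mono.
have hF : (h < F)%N by apply: leq_ltn_trans his' his.
have [esh ech] := cnst' h (ltnW th) his'.
exists (Ordinal hF), b; rewrite /hitb /=.
have nsth : ~~ stp (run P h) by apply: contra hst; exact: stp_mono.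
rewrite nsth ech eqxx esh /=.
have [h1 h2 h3 _] := @spec_run P h _ _ _ esh.
apply/and3P; split.
- case: (ltngtP h i1) his' => // [lt _|-> _]; last by move: hf; rewrite e.
  apply/negP => hfh.
  have hfh' : failure (tgt P (run P h)) (spec (run P h)) by rewrite esh.
  have := fail_stop nsth hfh'; rewrite -runS => hs1.
  have := @stp_mono P h.+1 i1 lt; rewrite hs1 /= => /(_ isT) hsis.
  by rewrite hsis in hst.
- rewrite tgtP hpos eqxx h1 eqxx /=; apply/forallP => u; apply/implyP => hu.
  have := h3 nsth b u hu; rewrite hpos leq_eqVlt => /orP [/eqP ebu|//].
  have : u = w by apply: perm_inj (val_inj (esym ebu)).
  by move=> euw; rewrite -euw hu in h2.
- by apply/forallP => i; rewrite hpos; apply: hlt.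
Qed.


Lemma card_pairs (T1 T2 : finType) (D : {set T1 * T2}) :
  #|D| = (\sum_(t : T1) #|[set u | (t, u) \in D]|)%N.
Proof.
have -> : (\sum_(t : T1) #|[set u | (t, u) \in D]| = \sum_t \sum_u (if (t, u) \in D then 1 else 0))%N.
  apply: eq_bigr => t _; rewrite -sum1_card big_mkcond /=.
  by apply: eq_bigr => u _; rewrite inE.
rewrite pair_big /= -sum1_card big_mkcond /=.
by apply: eq_bigr => -[t u] _.
Qed.

Definition hbp (P : prof) := [pick hb : 'I_F * M | hitb P hb.1 hb.2].

Lemma hbpP P h b : hbp P = Some (h, b) -> hitb P h b.
Proof. by rewrite /hbp; case: pickP => // -[h0 b0] hb0 [<- <-]. Qed.

Lemma count_step : (r * #|[set P : prof | j < kk P]| <= #|[set P : prof | kk P == j]|)%N.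
Proof.
set D := [set pu : prof * W | if hbp pu.1 is Some (h, b) then pu.2 \in Uof pu.1 h else false].
set f := fun pu : prof * W => if hbp pu.1 is Some (h, b) then swapP pu.1 b (wof pu.1 h) pu.2 else pu.1.
have h1 : (r * #|[set P : prof | j < kk P]| <= #|D|)%N.
  rewrite (card_pairs D) -sum1_card big_distrr /= big_mkcond /=.
  apply: leq_sum => P _; rewrite inE muln1.
  case: ifP => // hP.
  case e: (hbp P) => [[h b]|]; last first.
    by have [h [b hb]] := hit hP; move: e; rewrite /hbp; case: pickP => // /(_ (h, b)); rewrite hb.
  have hb := hbpP e.
  have -> : [set u | (P, u) \in D] = Uof P h by apply/setP => u; rewrite !inE /= e.
  move: hb; case/and5P => _ _ _ + _; rewrite /Uof.
  by case: (spec (run P h)) => [[[w m] U0]|] // /and3P [_ /eqP -> _].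
have h2 : #|D| = #|f @: D|.
  apply/esym/card_in_imset => -[P u] [P' u']; rewrite !inE /f /=.
  case e1: (hbp P) => [[h b]|] //; case e2: (hbp P') => [[h' b']|] // hu hu' eq.
  by have [-> ->] := hit_inj (hbpP e1) (hbpP e2) hu hu' eq.
rewrite (leq_trans h1) // h2 subset_leq_card //.
apply/subsetP => Q /imsetP [[P u]]; rewrite inE /f /= => + ->.
case e1: (hbp P) => [[h b]|] hu; move: hu; rewrite inE /= e1 // => hu.
by rewrite (hit_kk (hbpP e1) hu).
Qed.


Lemma kk_le P : (kk P <= F)%N.
Proof.
rewrite /kk; elim: F => [|i IH] //; rewrite runS.
by case/andP: (cnt_step P (run P i)) => _ h; rewrite (leq_trans h).
Qed.

End Machine.

Lemma telescope (C : nat -> nat) r K : (forall j, (r.+1 * C j.+1 <= C j)%N) ->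
  (r * (\sum_(j < K) C j.+1) + C K <= C 0)%N.
Proof.
move=> h; elim: K => [|K IH]; first by rewrite big_ord0 muln0.
rewrite big_ord_recr /= mulnDr -addnA; apply: leq_trans IH.
rewrite leq_add2l; have := h K; rewrite mulSn; lia.
Qed.

Lemma sum_lt (k F : nat) : (k <= F)%N -> (\sum_(j < F) (j < k : nat))%N = k.
Proof.
move=> hk; rewrite -(big_mkord xpredT (fun j => (j < k : nat))).
suff -> : (\sum_(0 <= j < F) (j < k : nat))%N = minn k F by lia.
elim: F {hk} => [|F IH]; first by rewrite big_geq // minn0.
rewrite big_nat_recr //= IH; case: (ltnP F k) => h /=; lia.
Qed.

End Aux.
Import Aux.

Local Open Scope ring_scope.

Theorem lemmaA3 (n r : nat) (hn : (1 <= n)%N) (hr : (1 <= r)%N)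
    (x : 'I_n + 'I_(n + r)) :
  probN (fun P : profile n r => (1 < Nstable P x)%N) <= 1 / (r%:R + 1)
  /\ expect (fun P : profile n r => Nstable P x) <= 1 + 1 / r%:R.
Proof.
set k := kk hr x.
set C := fun j => #|[set P : profile n r | (j <= k P)%N]|.
have hC : forall j, (r.+1 * C j.+1 <= C j)%N.
  move=> j; have := count_step hr x j; rewrite -/k.
  have -> : C j = (#|[set P : profile n r | k P == j]| + C j.+1)%N.
    rewrite /C -cardsUI; have -> : [set P : profile n r | k P == j] :&: [set P : profile n r | (j.+1 <= k P)%N] = set0.
      by apply/setP => P; rewrite !inE; case: eqP => // ->; rewrite ltnn.
    rewrite cards0 addn0; apply: eq_card => P; rewrite !inE.
    by rewrite leq_eqVlt eq_sym.
  rewrite /C mulSn; lia.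
have hO : (0 < #|profile n r|)%N.
  by apply/card_gt0P; exists ([ffun => 1%g], [ffun => 1%g]).
have C0 : C 0%N = #|profile n r| by rewrite /C; apply: eq_card => P; rewrite !inE.
have hr0 : (0 : rat) < r%:R by rewrite ltr0n.
have hO' : (0 : rat) < #|profile n r|%:R by rewrite ltr0n.
split.
  rewrite /probN ler_pdivrMr // mulrC mul1r ler_pdivlMr ?ltr_wpDl // natr1 -natrM ler_nat.
  rewrite -C0 mulnC; apply: leq_trans (hC 0%N); rewrite leq_mul2l /=.
  apply: subset_leq_card; apply/subsetP => P; rewrite !inE => h.
  by have := N_le hr x P; rewrite -/k => h'; rewrite -ltnS (leq_trans h h').
rewrite /expect.
set S := (\sum_(P : profile n r) k P)%N.
have hS : (r * S <= #|profile n r|)%N.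
  have -> : S = (\sum_(j < F n r) C j.+1)%N.
    rewrite /S (eq_bigr (fun P => \sum_(j < F n r) (j < k P : nat))%N); last first.
      by move=> P _; rewrite sum_lt // kk_le.
    rewrite exchange_big /=; apply: eq_bigr => j _.
    rewrite /C -sum1_card [in RHS]big_mkcond /=; apply: eq_bigr => P _; rewrite inE; by case: (j < k P)%N.
  by rewrite -C0; exact: leq_trans (leq_addr _ _) (@telescope C r (F n r) hC).
have hN : (\sum_(P : profile n r) Nstable P x <= #|profile n r| + S)%N.
  rewrite /S -sum1_card -big_split /=; apply: leq_sum => P _.
  by rewrite add1n; exact: N_le.
rewrite -natr_sum ler_pdivrMr // mulrDl mul1r.
apply: (le_trans (y := (#|profile n r| + S)%:R)); first by rewrite ler_nat.
rewrite natrD mul1r lerD2l mulrC ler_pdivlMr // mulrC -natrM ler_nat. exact: hS.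
Qed.
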